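(* Let $V$ be a finite-dimensional real vector space, $p\ge2$, and $(P,\Omega)$ a linear Dirac structure of order $p$ on $V$ relative to $\mathbb R$. Let $L=\{(v,\omega)\in V\times\Lambda^{p-1}V^*: v\in P,\ i_v\Omega=\omega|_{\Lambda^{p-1}P}\}$ and $L^\perp=\{(Z,\eta)\in\Lambda^{p-1}V\times V^*: Z\in\Lambda^{p-1}P,\ i_Z\Omega=\eta|_P\}$, and let $\pi^*(L)\subset\Lambda^{p-1}V^*$ and $\pi^*(L^\perp)\subset V^*$ be the projections onto the second components. Then $\Lambda^{p-1}\big(\pi^*(L^\perp)\big)\subset\pi^*(L)$.
   Context: A linear Dirac structure of order $p$ on $V$ relative to $\mathbb R$ is a pair $(P,\Omega)$ where $P\subset V$ is a subspace and $\Omega\in\Lambda^pP^*$, satisfying condition (H): for all $Z_1,\dots,Z_{p-1}\in\Lambda^{p-1}P$ there exists $v\in P$ with $(i_{Z_1}\Omega)\wedge\dots\wedge(i_{Z_{p-1}}\Omega)=i_v\Omega$. Here $(i_v\Omega)(Z)=\Omega(v\wedge Z)$ for $v\in P$, $Z\in\Lambda^{p-1}P$, and $(i_Z\Omega)(w)=\Omega(Z\wedge w)$ for $w\in P$. *)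

(* Defs.v *)
(* Exterior algebra of V = 'rV[R]_n in coordinates w.r.t.
   the standard basis: a multivector (or, dually, a multi-covector) is a
   function on subsets S of 'I_n, S <-> e_{s1} /\ ... /\ e_{sk} (s1<...<sk). *)
From HB Require Import structures.
From mathcomp Require Import all_boot all_order all_algebra.
From mathcomp Require Import reals.
Set Implicit Arguments. Unset Strict Implicit. Unset Printing Implicit Defensive.
Import Order.TTheory GRing.Theory Num.Theory.
Local Open Scope ring_scope.

Section Exterior.
Variable R : realType.

Local Notation mv n := {ffun {set 'I_n} -> R}.

(* sign of  e_T /\ e_U = sgnw T U e_(T :|: U)  for disjoint T U *)
Definition sgnw (n : nat) (T U : {set 'I_n}) : R :=
  (-1) ^+ #|[set tu : 'I_n * 'I_n |
              [&& tu.1 \in T, tu.2 \in U & (tu.2 < tu.1)%N]]|.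

Definition wedge (n : nat) (a b : mv n) : mv n :=
  [ffun S : {set 'I_n} => \sum_(T : {set 'I_n} | T \subset S)
                sgnw T (S :\: T) * a T * b (S :\: T)].

Definition mv1 (n : nat) : mv n := [ffun S : {set 'I_n} => (S == set0)%:R].
Definition ebasis (n : nat) (S : {set 'I_n}) : mv n := [ffun T : {set 'I_n} => (T == S)%:R].

Definition vec1 (n : nat) (v : 'rV[R]_n) : mv n :=
  [ffun S : {set 'I_n} => \sum_(i : 'I_n | S == [set i]) v 0 i].

Definition wedgeF (n k : nat) (f : 'I_k -> 'rV[R]_n) : mv n :=
  foldr (fun v acc => wedge (vec1 v) acc) (mv1 n) [seq f j | j <- enum 'I_k].

Definition grade (n k : nat) (a : mv n) : Prop :=
  forall S : {set 'I_n}, #|S| != k -> a S = 0.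

(* duality pairing  Lambda^k V^* x Lambda^k V -> R
   (so that (e1/\..../\ek)(v1/\.../\vk) = det (ei(vj))) *)
Definition pair (n : nat) (a b : mv n) : R := \sum_(S : {set 'I_n}) a S * b S.

Definition ev (n : nat) (eta v : 'rV[R]_n) : R := \sum_(i < n) eta 0 i * v 0 i.

Definition spanwedge (n k : nat) (W : 'rV[R]_n -> Prop) (x : mv n) : Prop :=
  exists (m : nat) (c : 'I_m -> R) (f : 'I_m -> 'I_k -> 'rV[R]_n),
    (forall i j, W (f i j)) /\
    forall S, x S = \sum_(i < m) c i * wedgeF (f i) S.

Definition ext_sub (n k : nat) (P : {vspace 'rV[R]_n}) (Z : mv n) : Prop :=
  spanwedge k (fun v => v \in P) Z.

Definition iv (n : nat) (Omega : mv n) (v : 'rV[R]_n) : mv n :=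
  [ffun S : {set 'I_n} => pair Omega (wedge (vec1 v) (ebasis S))].

Definition iZ (n : nat) (Omega Z : mv n) : 'rV[R]_n :=
  \row_i pair Omega (wedge Z (vec1 (delta_mx 0 i))).

Definition eq_on (n k : nat) (P : {vspace 'rV[R]_n}) (a b : mv n) : Prop :=
  forall Y, ext_sub k P Y -> pair a Y = pair b Y.

(* Omega : an element of Lambda^p V^* representing (by restriction) an
   element of Lambda^p P^*; every element of Lambda^p P^* arises this way,
   and all notions below only depend on the restriction. *)
Definition condH (n p : nat) (P : {vspace 'rV[R]_n}) (Omega : mv n) : Prop :=
  forall Zs : 'I_(p.-1) -> mv n,
    (forall j, ext_sub p.-1 P (Zs j)) ->
    exists2 v, v \in P &
      eq_on p.-1 P (wedgeF (fun j => iZ Omega (Zs j))) (iv Omega v).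

Definition linear_Dirac (n p : nat) (P : {vspace 'rV[R]_n}) (Omega : mv n) : Prop :=
  grade p Omega /\ condH p P Omega.

Definition piL (n p : nat) (P : {vspace 'rV[R]_n}) (Omega : mv n) (w : mv n) : Prop :=
  grade p.-1 w /\ exists2 v, v \in P & eq_on p.-1 P (iv Omega v) w.

Definition piLperp (n p : nat) (P : {vspace 'rV[R]_n}) (Omega : mv n)
    (eta : 'rV[R]_n) : Prop :=
  exists2 Z, ext_sub p.-1 P Z &
    forall w, w \in P -> ev (iZ Omega Z) w = ev eta w.

End Exterior.

(* Main.v *)
Require Import Defs.
From HB Require Import structures.
From mathcomp Require Import all_boot all_order all_algebra.
From mathcomp Require Import reals ring.
From Stdlib Require Import IndefiniteDescription.
Set Implicit Arguments. Unset Strict Implicit. Unset Printing Implicit Defensive.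
Import Order.TTheory GRing.Theory Num.Theory.
Local Open Scope ring_scope.

Lemma wedge_vec1 (R : realType) n (u : 'rV[R]_n) (B : {ffun {set 'I_n} -> R}) S :
  wedge (vec1 u) B S = \sum_(j in S) sgnw R [set j] (S :\ j) * u 0 j * B (S :\ j).
Proof.
rewrite ffunE.
under eq_bigr => T _ do rewrite ffunE big_distrr big_distrl /=.
rewrite (exchange_big_dep predT) //=.
rewrite [RHS]big_mkcond /=; apply: eq_bigr => i _.
rewrite (eq_bigl (fun T => (T == [set i]) && (T \subset S))); last first.
  by move=> T; rewrite andbC.
by rewrite big_mkcondr /= big_pred1_eq -sub1set.
Qed.

Definition cnt n (i : 'I_n) (U : {set 'I_n}) := #|[set b in U | (b < i)%N]|.

Lemma sgnw1 (R : realType) n (i : 'I_n) U : sgnw R [set i] U = (-1) ^+ cnt i U.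
Proof.
have inj : injective (fun b : 'I_n => (i, b)) by move=> x y [].
rewrite /sgnw /cnt -(card_imset [set b in U | (b < i)%N] inj); congr (_ ^+ _); apply: eq_card => -[a b]; rewrite !inE /=.
apply/idP/imsetP => [/and3P[/eqP-> bU lt]| [c]].
  by exists b; rewrite // inE bU.
by rewrite inE => /andP[cU lt] [-> ->]; rewrite eqxx cU lt.
Qed.

Lemma cntU1 n (i j : 'I_n) (A : {set 'I_n}) : j \notin A -> cnt i (j |: A) = (cnt i A + (j < i))%N.
Proof.
move=> jA; rewrite /cnt.
case: (ltnP j i) => ji.
  have -> : [set b in j |: A | (b < i)%N] = j |: [set b in A | (b < i)%N].
    by apply/setP => b; rewrite !inE; case: (eqVneq b j) => [->|]; rewrite ?ji.
  by rewrite cardsU1 inE (negPf jA) /= addnC.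
have -> : [set b in j |: A | (b < i)%N] = [set b in A | (b < i)%N].
  apply/setP => b; rewrite !inE; case: (eqVneq b j) => [->|] //=.
  by rewrite ltnNge ji andbF.
by rewrite addn0.
Qed.

Lemma sgn_swap (R : realType) n (i j : 'I_n) (A : {set 'I_n}) : i != j -> i \notin A -> j \notin A ->
  sgnw R [set i] (j |: A) * sgnw R [set j] (i |: A) =
  - (sgnw R [set j] A * sgnw R [set i] A).
Proof.
move=> ij iA jA; rewrite !sgnw1 !cntU1 // !exprD.
case: (ltngtP i j) => [lt|lt|e]; last by move/val_inj: e ij => ->; rewrite eqxx.
  by rewrite /= expr1 expr0; ring.
by rewrite /= expr1 expr0; ring.
Qed.
Definition ctr (R : realType) n (th : 'rV[R]_n) (B : {ffun {set 'I_n} -> R}) : {ffun {set 'I_n} -> R} :=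
  [ffun T : {set 'I_n} => \sum_(i : 'I_n | i \notin T) sgnw R [set i] T * th 0 i * B (i |: T)].

Lemma pair_wedge (R : realType) n (th : 'rV[R]_n) (A B : {ffun {set 'I_n} -> R}) :
  pair (wedge (vec1 th) A) B = pair A (ctr th B).
Proof.
rewrite /pair.
under eq_bigr => S _ do rewrite wedge_vec1 big_distrl /=.
under [RHS]eq_bigr => U _ do rewrite ffunE big_distrr /=.
rewrite (exchange_big_dep predT) //= [RHS](exchange_big_dep predT) //=.
apply: eq_bigr => j _.
rewrite (reindex_onto (fun U => j |: U) (fun S => S :\ j)); last first.
  by move=> S jS; rewrite setD1K.
apply: eq_big => [U|U jU].
  rewrite setU11 /=; apply/eqP/idP => [<-|jU]; first by rewrite !inE eqxx.
  by rewrite setU1K.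
have jU2 : j \notin U by move: jU => /andP[_ /eqP <-]; rewrite !inE eqxx.
rewrite setU1K //; ring.
Qed.

Lemma ctr_wedge (R : realType) n (th u : 'rV[R]_n) (B : {ffun {set 'I_n} -> R}) T :
 ctr th (wedge (vec1 u) B) T = ev th u * B T - wedge (vec1 u) (ctr th B) T.
Proof.
rewrite ffunE.
under eq_bigr => i iT do rewrite wedge_vec1 (big_setU1 _ iT) /= setU1K // mulrDr.
rewrite big_split /= wedge_vec1.
have E j : j \in T -> ctr th B (T :\ j) = sgnw R [set j] (T :\ j) * th 0 j * B T +
   \sum_(i | i \notin T) sgnw R [set i] (T :\ j) * th 0 i * B (i |: (T :\ j)).
  move=> jT; rewrite ffunE (bigD1 j) /=; last by rewrite !inE eqxx.
  rewrite setD1K //; congr (_ + _); apply: eq_bigl => i.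
  by rewrite !inE; case: (eqVneq i j) => [->|ij]; rewrite ?eqxx ?jT /= ?andbT.
under [in RHS]eq_bigr => j jT do rewrite E // mulrDr.
have sq k (U : {set 'I_n}) : sgnw R [set k] U * sgnw R [set k] U = 1.
  by rewrite sgnw1 -exprMn mulrNN mul1r expr1n.
rewrite big_split /= opprD /ev big_distrl [in RHS](bigID (fun i => i \in T)) /=.
have -> : \sum_(i | i \notin T) sgnw R [set i] T * th 0 i * (sgnw R [set i] T * u 0 i * B T)
   = \sum_(i | i \notin T) th 0 i * u 0 i * B T.
  apply: eq_bigr => i _.
  transitivity (sgnw R [set i] T * sgnw R [set i] T * (th 0 i * u 0 i * B T)); first ring.
  by rewrite sq mul1r.
have -> : \sum_(j in T) sgnw R [set j] (T :\ j) * u 0 j * (sgnw R [set j] (T :\ j) * th 0 j * B T)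
   = \sum_(i in T) th 0 i * u 0 i * B T.
  apply: eq_bigr => i _.
  transitivity (sgnw R [set i] (T :\ i) * sgnw R [set i] (T :\ i) * (th 0 i * u 0 i * B T)); first ring.
  by rewrite sq mul1r.
set Y := \sum_(j in T) (sgnw R [set j] (T :\ j) * u 0 j * _).
suff -> : \sum_(i | i \notin T) sgnw R [set i] T * th 0 i *
     \sum_(i0 in T) sgnw R [set i0] ((i |: T) :\ i0) * u 0 i0 * B ((i |: T) :\ i0) = - Y.
  ring.
under eq_bigr => i _ do rewrite big_distrr.
rewrite exchange_big /Y -sumrN; apply: eq_bigr => j jT.
rewrite big_distrr -sumrN; apply: eq_bigr => i iT /=.
have ij : i != j by apply: contraNneq iT => ->.
have e2 : (i |: T) :\ j = i |: (T :\ j).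
  by apply/setP => k; rewrite !inE; case: (eqVneq k j) => [->|_] /=; rewrite ?orbF // eq_sym (negPf ij).
have := @sgn_swap R n i j (T :\ j) ij; rewrite !inE eqxx (negPf iT) andbF /= => /(_ isT isT).
rewrite setD1K // e2 => H.
transitivity (sgnw R [set i] T * sgnw R [set j] (i |: T :\ j) * th 0 i * u 0 j * B (i |: T :\ j)); first ring.
rewrite H; ring.
Qed.

Definition sc (R : realType) n (a : R) (Y : {ffun {set 'I_n} -> R}) : {ffun {set 'I_n} -> R} :=
  [ffun S => a * Y S].

Lemma ctr_mv1 (R : realType) n (th : 'rV[R]_n) : ctr th (mv1 R n) = 0.
Proof.
apply/ffunP => T; rewrite !ffunE big1 // => i _; rewrite ffunE.
case: eqP => [h|_]; last by rewrite mulr0.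
by have := setU11 i T; rewrite h inE.
Qed.

Lemma ctr_lin (R : realType) n (th : 'rV[R]_n) a (Y1 Y2 : {ffun {set 'I_n} -> R}) :
  ctr th (sc a Y1 + Y2) = sc a (ctr th Y1) + ctr th Y2.
Proof.
apply/ffunP => T; rewrite !ffunE big_distrr -big_split; apply: eq_bigr => i _.
rewrite !ffunE /=; ring.
Qed.

Lemma ctr0 (R : realType) n (th : 'rV[R]_n) : ctr th 0 = 0.
Proof. by apply/ffunP => T; rewrite !ffunE big1 // => i _; rewrite ffunE mulr0. Qed.

Lemma ctr_wedgeE (R : realType) n (th u : 'rV[R]_n) (B : {ffun {set 'I_n} -> R}) :
 ctr th (wedge (vec1 u) B) = sc (ev th u) B + (sc (-1) (wedge (vec1 u) (ctr th B)) + 0).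
Proof. apply/ffunP => T; rewrite ctr_wedge !ffunE; ring. Qed.

Inductive good (R : realType) n (P : {vspace 'rV[R]_n}) : {ffun {set 'I_n} -> R} -> Prop :=
| good1 : good P (mv1 R n)
| goodW u Y : u \in P -> good P Y -> good P (wedge (vec1 u) Y)
| good0 : good P 0
| goodL a Y1 Y2 : good P Y1 -> good P Y2 -> good P (sc a Y1 + Y2).

Lemma good_ctr (R : realType) n (P : {vspace 'rV[R]_n}) th Y : good P Y -> good P (ctr th Y).
Proof.
elim => [|u Y' uP gY IH||a Y1 Y2 _ IH1 _ IH2].
- rewrite ctr_mv1; exact: good0.
- rewrite ctr_wedgeE; apply: goodL => //; apply: goodL; [exact: goodW|exact: good0].
- rewrite ctr0; exact: good0.
- by rewrite ctr_lin; apply: goodL.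
Qed.

Lemma good_ctr_eq (R : realType) n (P : {vspace 'rV[R]_n}) th th' Y :
  (forall w, w \in P -> ev th w = ev th' w) -> good P Y -> ctr th Y = ctr th' Y.
Proof.
move=> h; elim => [|u Y' uP _ IH||a Y1 Y2 _ IH1 _ IH2].
- by rewrite !ctr_mv1.
- by rewrite !ctr_wedgeE h // IH.
- by rewrite !ctr0.
- by rewrite !ctr_lin IH1 IH2.
Qed.

Definition wedgeL (R : realType) n (s : seq 'rV[R]_n) :=
  foldr (fun v acc => wedge (vec1 v) acc) (mv1 R n) s.

Lemma key (R : realType) n (P : {vspace 'rV[R]_n}) (s s' : seq 'rV[R]_n) Y :
  size s = size s' -> (forall k w, w \in P -> ev (nth 0 s k) w = ev (nth 0 s' k) w) ->
  good P Y -> pair (wedgeL s) Y = pair (wedgeL s') Y.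
Proof.
elim: s s' Y => [|a s IH] [|a' s'] //= Y [] sz h gY.
rewrite !pair_wedge (good_ctr_eq (h 0%N) gY).
apply: IH => //; last exact: good_ctr.
by move=> k; apply: (h k.+1).
Qed.

Lemma grade_wedgeL (R : realType) n (s : seq 'rV[R]_n) : grade (size s) (wedgeL s).
Proof.
elim: s => [|a s IH] S /= hS.
  by rewrite ffunE; case: eqP => // e; move: hS; rewrite e cards0.
rewrite wedge_vec1 big1 // => j jS.
rewrite IH ?mulr0 //; apply: contra hS => /eqP e.
by rewrite (cardsD1 j S) jS e.
Qed.

Lemma good_wedgeL (R : realType) n (P : {vspace 'rV[R]_n}) (s : seq 'rV[R]_n) :
  (forall v, v \in s -> v \in P) -> good P (wedgeL s).
Proof.
elim: s => [|a s IH] h /=; first exact: good1.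
apply: goodW; first by apply: h; rewrite inE eqxx.
by apply: IH => v vs; apply: h; rewrite inE vs orbT.
Qed.

Lemma ext_good (R : realType) n k (P : {vspace 'rV[R]_n}) Y : ext_sub k P Y -> good P Y.
Proof.
move=> [m [c [f [hf hY]]]].
have -> : Y = \sum_(i < m) sc (c i) (wedgeF (f i)).
  by apply/ffunP => S; rewrite hY sum_ffunE; apply: eq_bigr => i _; rewrite ffunE.
elim/big_rec: _ => [|i x _ gx]; first exact: good0.
apply: goodL => //; apply: good_wedgeL => v /mapP [j _ ->]; exact: hf.
Qed.

Lemma nth_mapF (T : Type) k (f : 'I_k -> T) (o : 'I_k) x0 :
  nth x0 [seq f j | j <- enum 'I_k] o = f o.
Proof. by rewrite (nth_map o) ?size_enum_ord // nth_ord_enum. Qed.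

Lemma eqF (R : realType) n k (P : {vspace 'rV[R]_n}) (eta eta' : 'I_k -> 'rV[R]_n) :
  (forall j w, w \in P -> ev (eta j) w = ev (eta' j) w) ->
  eq_on k P (wedgeF eta) (wedgeF eta').
Proof.
move=> h Y /ext_good gY.
apply: (@key R n P [seq eta j | j <- enum 'I_k] [seq eta' j | j <- enum 'I_k]) => //.
  by rewrite !size_map.
move=> i w wP; case: (ltnP i k) => ik.
  pose o := Ordinal ik.
  have -> : i = o by [].
  by rewrite !nth_mapF h.
by rewrite !nth_default // size_map size_enum_ord.
Qed.

Lemma grade_wedgeF (R : realType) n k (f : 'I_k -> 'rV[R]_n) : grade k (wedgeF f).
Proof. by have := @grade_wedgeL R n [seq f j | j <- enum 'I_k]; rewrite size_map size_enum_ord. Qed.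

Lemma wedgeLin (R : realType) n (a : R) (x y : 'rV[R]_n) (B : {ffun {set 'I_n} -> R}) T :
  wedge (vec1 (a *: x + y)) B T = a * wedge (vec1 x) B T + wedge (vec1 y) B T.
Proof.
rewrite !wedge_vec1 big_distrr -big_split; apply: eq_bigr => j _; rewrite !mxE /=; ring.
Qed.

Lemma wedge0 (R : realType) n (B : {ffun {set 'I_n} -> R}) T :
  wedge (vec1 (0 : 'rV[R]_n)) B T = 0.
Proof. by rewrite wedge_vec1 big1 // => j _; rewrite mxE mulr0 mul0r. Qed.

Lemma ivL (R : realType) n (Om : {ffun {set 'I_n} -> R}) (a : R) (x y : 'rV[R]_n) S :
  iv Om (a *: x + y) S = a * iv Om x S + iv Om y S.
Proof.
rewrite !ffunE /pair big_distrr -big_split; apply: eq_bigr => T _ /=.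
rewrite wedgeLin; ring.
Qed.

Lemma iv_sum (R : realType) n (Om Y : {ffun {set 'I_n} -> R}) m (c : 'I_m -> R)
  (v : 'I_m -> 'rV[R]_n) :
  pair (iv Om (\sum_(i < m) c i *: v i)) Y = \sum_(i < m) c i * pair (iv Om (v i)) Y.
Proof.
elim/big_rec2: _ => [|i y1 y2 _ IH].
  by rewrite /pair big1 // => S _; rewrite ffunE /pair big1 ?mul0r // => T _; rewrite wedge0 mulr0.
rewrite -IH /pair big_distrr -big_split; apply: eq_bigr => S _ /=; rewrite ivL; ring.
Qed.

Unset Implicit Arguments.

Theorem lemma4p4 (R : realType) (n p : nat) (P : {vspace 'rV[R]_n})
    (Omega : {ffun {set 'I_n} -> R}) :
  (2 <= p)%N -> linear_Dirac p P Omega ->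
  forall w : {ffun {set 'I_n} -> R}, spanwedge p.-1 (piLperp p P Omega) w -> piL p P Omega w.
Proof.
move=> hp [hgr hH] w [m [c [f [hf hw]]]].
split.
  move=> S hS; rewrite hw big1 // => i _; rewrite grade_wedgeF ?mulr0 //.
have hZ : forall i j, {Z | ext_sub p.-1 P Z /\
    forall x, x \in P -> ev (iZ Omega Z) x = ev (f i j) x}.
  move=> i j; apply: constructive_indefinite_description.
  by case: (hf i j) => Z h1 h2; exists Z; split.
have hv : forall i, {v | v \in P /\
    eq_on p.-1 P (wedgeF (fun j => iZ Omega (sval (hZ i j)))) (iv Omega v)}.
  move=> i; apply: constructive_indefinite_description.
  have [v vP hv] := hH (fun j => sval (hZ i j)) (fun j => proj1 (svalP (hZ i j))).
  by exists v.
exists (\sum_(i < m) c i *: sval (hv i)).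
  by apply: rpred_sum => i _; apply: rpredZ; exact: (proj1 (svalP (hv i))).
move=> Y hY; rewrite iv_sum.
have -> : pair w Y = \sum_(i < m) c i * pair (wedgeF (f i)) Y.
  rewrite /pair; under eq_bigr => S _ do rewrite hw big_distrl /=.
  rewrite exchange_big; apply: eq_bigr => i _; rewrite big_distrr.
  by apply: eq_bigr => S _ /=; ring.
apply: eq_bigr => i _; congr (_ * _).
rewrite (@eqF R n p.-1 P (f i) (fun j => iZ Omega (sval (hZ i j))) _ Y hY); last first.
  by move=> j x xP; rewrite (proj2 (svalP (hZ i j))).
by rewrite (proj2 (svalP (hv i)) Y hY).
Qed.
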